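(* Under the standing assumptions, let $\vec v$ be a demand vector, let $(\vec v,\vec v_1)$ be an $(s,t_1)$-adjacent pair with switching cost $2$ and intermediate task $i_1$, and let $(\vec v,\vec v_2)$ be an $(s,t_2)$-adjacent pair with switching cost $2$ and intermediate task $i_2$. Then the tasks $s,i_1,t_1,i_2,t_2$ are not all distinct.
   Context: Standing assumptions: $n\ge 4$, $k\ge 5$, and $f_1,\dots,f_n$ are functions from demand vectors to $[k]$ satisfying the demand (for every demand vector $\vec v$ and task $j$, exactly $v_j$ agents $a$ have $f_a(\vec v)=j$), with maximum switching cost at most $2$. A demand vector is $\vec v=(v_1,\dots,v_k)$ of non-negative integers with $\sum v_j=n$. The switching cost of $(\vec v,\vec v')$ is the number of agents $a$ with $f_a(\vec v)\ne f_a(\vec v')$; $\vec v,\vec v'$ are adjacent if $\|\vec v-\vec v'\|_1=2$. An ordered pair $(\vec v_1,\vec v_2)$ is $(s,t)$-adjacent if $s\ne t$ and $\vec v_2$ is obtained from $\vec v_1$ by moving one unit of demand from task $s$ to task $t$. Agent $a$ is $(i,j)$-mobile with respect to $(\vec v_1,\vec v_2)$ if $f_a(\vec v_1)=i$, $f_a(\vec v_2)=j$, $i\ne j$. If $(\vec v_1,\vec v_2)$ is $(s,t)$-adjacent with switching cost $2$, then there is a task $i\notin\{s,t\}$ such that one switching agent is $(s,i)$-mobile and the other is $(i,t)$-mobile; $i$ is called the intermediate task of $(\vec v_1,\vec v_2)$. *)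

(* Defs.v *)
From mathcomp Require Import all_boot.
Set Implicit Arguments. Unset Strict Implicit. Unset Printing Implicit Defensive.

(* Agents are 'I_n, tasks are 'I_k.  An assignment is
   f : 'I_n -> {ffun 'I_k -> nat} -> 'I_k  (f a v = task of agent a at v);
   only its values on demand vectors matter. *)

Definition demand_vec (n k : nat) (v : {ffun 'I_k -> nat}) : bool :=
  (\sum_(j < k) v j == n).

Definition satisfies_demand (n k : nat) (f : 'I_n -> {ffun 'I_k -> nat} -> 'I_k) : Prop :=
  forall v, demand_vec n v -> forall j : 'I_k, #|[set a | f a v == j]| = v j.

Definition switching_cost (n k : nat) (f : 'I_n -> {ffun 'I_k -> nat} -> 'I_k)
  (v v' : {ffun 'I_k -> nat}) : nat := #|[set a | f a v != f a v']|.

Definition l1dist (k : nat) (v v' : {ffun 'I_k -> nat}) : nat :=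
  \sum_(j < k) ((v j - v' j) + (v' j - v j)).

Definition adjacent (k : nat) (v v' : {ffun 'I_k -> nat}) : bool := l1dist v v' == 2.

Definition max_switching_cost_le (n k : nat) (f : 'I_n -> {ffun 'I_k -> nat} -> 'I_k)
  (c : nat) : Prop :=
  forall v v', demand_vec n v -> demand_vec n v' -> adjacent v v' ->
    switching_cost f v v' <= c.

Definition st_adjacent (k : nat) (s t : 'I_k) (v1 v2 : {ffun 'I_k -> nat}) : Prop :=
  s != t /\ 0 < v1 s /\ v2 s = (v1 s).-1 /\ v2 t = (v1 t).+1 /\
  (forall j, j != s -> j != t -> v2 j = v1 j).

Definition mobile (n k : nat) (f : 'I_n -> {ffun 'I_k -> nat} -> 'I_k) (a : 'I_n)
  (i j : 'I_k) (v1 v2 : {ffun 'I_k -> nat}) : Prop :=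
  f a v1 = i /\ f a v2 = j /\ i != j.

Definition intermediate_task (n k : nat) (f : 'I_n -> {ffun 'I_k -> nat} -> 'I_k)
  (s t i : 'I_k) (v1 v2 : {ffun 'I_k -> nat}) : Prop :=
  i != s /\ i != t /\
  exists a b : 'I_n, a != b /\ mobile f a s i v1 v2 /\ mobile f b i t v1 v2.

(* Main.v *)
Require Import Defs.
From mathcomp Require Import all_boot.

Lemma card3_le (T : finType) (S : {set T}) a b c :
  a \in S -> b \in S -> c \in S -> a != b -> a != c -> b != c -> 3 <= #|S|.
Proof.
move=> aS bS cS ab ac bc.
have sub : [set a; b; c] \subset S.
  by apply/subsetP => x; rewrite !inE => /orP [/orP [] | ] /eqP ->.
apply: leq_trans (subset_leq_card sub).
rewrite setUC cardsU1 cards2 ab !inE negb_or eq_sym ac eq_sym bc.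
by [].
Qed.

Lemma nonswitch (n k : nat) (f : 'I_n -> {ffun 'I_k -> nat} -> 'I_k) v w a b c :
  switching_cost f v w = 2 -> a != b -> f a v != f a w -> f b v != f b w ->
  c != a -> c != b -> f c w = f c v.
Proof.
move=> sc ab Ha Hb ca cb; apply/eqP; rewrite eq_sym; apply/negPn/negP => Hc.
have := @card3_le _ [set x | f x v != f x w] a b c.
rewrite !inE Ha Hb Hc ab eq_sym ca eq_sym cb.
by rewrite -/(switching_cost f v w) sc => /(_ isT isT isT isT isT isT).
Qed.

Arguments nonswitch {n k f v w a b c}.
Arguments card3_le {T S a b c}.

Theorem lemma4p6 (n k : nat) (f : 'I_n -> {ffun 'I_k -> nat} -> 'I_k) :
  4 <= n -> 5 <= k ->
  satisfies_demand f ->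
  max_switching_cost_le f 2 ->
  forall (v v1 v2 : {ffun 'I_k -> nat}) (s t1 t2 i1 i2 : 'I_k),
    demand_vec n v -> demand_vec n v1 -> demand_vec n v2 ->
    st_adjacent s t1 v v1 -> switching_cost f v v1 = 2 -> intermediate_task f s t1 i1 v v1 ->
    st_adjacent s t2 v v2 -> switching_cost f v v2 = 2 -> intermediate_task f s t2 i2 v v2 ->
    ~~ uniq [:: s; i1; t1; i2; t2].
Proof.
move=> _ _ _ Hmax v v1 v2 s t1 t2 i1 i2 _ dv1 dv2 A1 sc1 I1 A2 sc2 I2.
apply/negP; rewrite /= !inE !negb_or -!andbA.
case/andP=> si1; case/andP=> st1; case/andP=> si2; case/andP=> st2.
case/andP=> i1t1; case/andP=> i1i2; case/andP=> i1t2; case/andP=> t1i2.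
case/andP=> t1t2; case/andP=> i2t2 _.
case: A1 => _ [_ [A1s [A1t A1o]]].
case: A2 => _ [_ [A2s [A2t A2o]]].
case: I1 => _ [_ [a1 [b1 [ab1 [[Ma1 [Ma1' _]] [Mb1 [Mb1' _]]]]]]].
case: I2 => _ [_ [a2 [b2 [ab2 [[Ma2 [Ma2' _]] [Mb2 [Mb2' _]]]]]]].
have adj : adjacent v1 v2.
  have t21 : t2 != t1 by rewrite eq_sym.
  rewrite /adjacent /l1dist (bigD1 t1) // (bigD1 t2) /= ?t21 //.
  rewrite big1; last first.
    move=> j /andP [jt1 jt2].
    case: (eqVneq j s) => [->|js]; first by rewrite A1s A2s subnn.
    by rewrite A1o // A2o // subnn.
  have h1 : v2 t1 = v t1 by apply: A2o; rewrite // eq_sym.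
  have h2 : v1 t2 = v t2 by apply: A1o; rewrite // eq_sym.
  by rewrite A1t A2t h1 h2 !subSnn !(eqP (leqnSn _)).
have := Hmax v1 v2 dv1 dv2 adj.
have Hd : forall a, f a v1 != f a v2 -> a \in [set a | f a v1 != f a v2].
  by move=> a; rewrite inE.
have a1v := Ma1; have b1v := Mb1; have a2v := Ma2; have b2v := Mb2.
have b1b2 : b1 != b2 by apply/eqP => E; move: i1i2; rewrite -Mb1 -Mb2 E eqxx.
have b1a2 : b1 != a2 by apply/eqP => E; move: si1; rewrite -Mb1 -Ma2 E eqxx.
have b2a1 : b2 != a1 by apply/eqP => E; move: si2; rewrite -Mb2 -Ma1 E eqxx.
have sw1a : f a1 v != f a1 v1 by rewrite Ma1 Ma1'.
have sw1b : f b1 v != f b1 v1 by rewrite Mb1 Mb1'.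
have sw2a : f a2 v != f a2 v2 by rewrite Ma2 Ma2'.
have sw2b : f b2 v != f b2 v2 by rewrite Mb2 Mb2'.
have Fb1 : f b1 v2 = i1 by rewrite (nonswitch sc2 ab2 sw2a sw2b).
have b2b1 : b2 != b1 by rewrite eq_sym.
have Fb2 : f b2 v1 = i2 by rewrite (nonswitch sc1 ab1 sw1a sw1b).
have Fa1 : f a1 v1 != f a1 v2.
  rewrite Ma1'; case: (eqVneq a1 a2) => [->|a12]; first by rewrite Ma2'.
  have a1b2 : a1 != b2 by rewrite eq_sym.
  by rewrite (nonswitch sc2 ab2 sw2a sw2b a12 a1b2) Ma1 eq_sym.
have Fb1' : f b1 v1 != f b1 v2 by rewrite Mb1' Fb1 eq_sym.
have Fb2' : f b2 v1 != f b2 v2 by rewrite Mb2' Fb2.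
have a1b1 : a1 != b1 := ab1.
have := card3_le (Hd _ Fa1) (Hd _ Fb1') (Hd _ Fb2') a1b1 _ b1b2.
rewrite eq_sym b2a1 => /(_ isT).
by rewrite /switching_cost => /leq_trans H /H.
Qed.
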